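(* Let $q=2^m$ with $m\ge 6$ even, and let $\mathbb D$ be the $3$-$(q+1,q-4,(q-4)(q-5)(q-6)/60)$ design $(U_{q+1},\mathcal B_{q-4}(\mathrm{Tr}_{q^2/q}(\mathcal C_{\{3,5\}})))$. Then $\dim_q\mathbb D=4$.
   Context: $U_{q+1}$ is the set of $(q+1)$-th roots of unity in $\mathrm{GF}(q^2)$; coordinates are indexed by $U_{q+1}$. $\mathcal C_{\{3,5\}}=\{(a_3u^3+a_{q-2}u^{q-2}+a_5u^5+a_{q-4}u^{q-4})_{u\in U_{q+1}}: a_i\in\mathrm{GF}(q^2)\}$; $\mathrm{Tr}_{q^2/q}(\mathcal C)$ is obtained by applying $x\mapsto x+x^q$ coordinatewise; $\mathcal B_w(\mathcal C)$ is the set of supports of codewords of Hamming weight $w$. The dimension $\dim_q\mathbb D$ of a design over $\mathrm{GF}(q)$ is the minimum rank over $\mathrm{GF}(q)$ among all matrices obtained from its $(0,1)$ block-by-point incidence matrix by replacing each $1$ with an arbitrary nonzero element of $\mathrm{GF}(q)$. *)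

(* Defs.v *)
From HB Require Import structures.
From mathcomp Require Import all_boot all_order all_algebra all_field.
Set Implicit Arguments. Unset Strict Implicit. Unset Printing Implicit Defensive.
Import GRing.Theory.
Local Open Scope ring_scope.

Definition Uroots (F : finFieldType) (q : nat) : {set F} :=
  [set u : F | u ^+ q.+1 == 1].

Definition trq (F : finFieldType) (q : nat) (x : F) : F := x + x ^+ q.

(* The codeword of C_{3,5} with coefficients (a3, a_{q-2}, a5, a_{q-4}),
   evaluated at u. *)
Definition C35 (F : finFieldType) (q : nat) (a3 aqm2 a5 aqm4 : F) (u : F) : F :=
  a3 * u ^+ 3 + aqm2 * u ^+ (q - 2) + a5 * u ^+ 5 + aqm4 * u ^+ (q - 4).

Definition trSupport (F : finFieldType) (q : nat) (a3 aqm2 a5 aqm4 : F) : {set F} :=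
  [set u in Uroots F q | trq q (C35 q a3 aqm2 a5 aqm4 u) != 0].

Definition blocksW (F : finFieldType) (q w : nat) : {set {set F}} :=
  [set S : {set F} | [exists a : F * F * F * F,
     (S == trSupport q a.1.1.1 a.1.1.2 a.1.2 a.2) && (#|S| == w)]].

(* Matrices over K obtained from the block-by-point incidence matrix of the
   design (P, B) by replacing each 1 with an arbitrary nonzero element of K. *)
Definition nz_incidence (K F : finFieldType) (P : {set F}) (B : {set {set F}})
  (M : 'M[K]_(#|B|, #|P|)) : Prop :=
  forall (i : 'I_#|B|) (j : 'I_#|P|),
    (M i j != 0) = (enum_val j \in enum_val i).

Definition design_dim_eq (K F : finFieldType) (P : {set F}) (B : {set {set F}})
  (d : nat) : Prop :=
  (exists M : 'M[K]_(#|B|, #|P|), nz_incidence M /\ \rank M = d) /\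
  (forall M : 'M[K]_(#|B|, #|P|), nz_incidence M -> (d <= \rank M)%N).

(* Main.v *)
Require Import Defs.
From HB Require Import structures.
From mathcomp Require Import all_boot all_order all_algebra all_field.
From mathcomp Require Import cyclic ring zify.
From Stdlib Require Import Classical.
Import GRing.Theory.
Local Open Scope ring_scope.


Section Emb.
Variables (K F : finFieldType) (h2K : (2%N \in [pchar K])) (h2F : (2%N \in [pchar F])).
Variable q : nat.
Hypothesis hK : #|K| = q.
Hypothesis hF : #|F| = (q ^ 2)%N.

Let K2 := pPrimeCharType h2K.
Let F2 := pPrimeCharType h2F.
Let iK : {rmorphism 'F_2 -> K2} := in_alg K2.
Let iF : {rmorphism 'F_2 -> F2} := in_alg F2.
Let evK (r : {poly 'F_2}) (x : K) : K := (map_poly iK r).[x].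
Let evF (r : {poly 'F_2}) (x : F) : F := (map_poly iF r).[x].

Lemma evK_add r s x : evK (r + s) x = evK r x + evK s x.
Proof. by rewrite /evK rmorphD hornerD. Qed.
Lemma evK_mul r s x : evK (r * s) x = evK r x * evK s x.
Proof. by rewrite /evK rmorphM hornerM. Qed.
Lemma evK_opp r x : evK (- r) x = - evK r x.
Proof. by rewrite /evK rmorphN hornerN. Qed.
Lemma evF_add r s x : evF (r + s) x = evF r x + evF s x.
Proof. by rewrite /evF rmorphD hornerD. Qed.
Lemma evF_mul r s x : evF (r * s) x = evF r x * evF s x.
Proof. by rewrite /evF rmorphM hornerM. Qed.
Lemma evF_opp r x : evF (- r) x = - evF r x.
Proof. by rewrite /evF rmorphN hornerN. Qed.
Lemma evK_Xn n x : evK 'X^n x = x ^+ n.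
Proof. by rewrite /evK map_polyXn hornerXn. Qed.
Lemma evK_X x : evK 'X x = x.
Proof. by rewrite /evK map_polyX hornerX. Qed.
Lemma evK_1 x : evK 1 x = 1.
Proof. by rewrite /evK rmorph1 hornerC. Qed.
Lemma evF_1 x : evF 1 x = 1.
Proof. by rewrite /evF rmorph1 hornerC. Qed.
Lemma evK_C c x : evK c%:P x = iK c.
Proof. by rewrite /evK map_polyC hornerC. Qed.

Lemma q_gt1 : (1 < q)%N.
Proof. by rewrite -hK; apply: finNzRing_gt1. Qed.

Lemma prim_K : exists g : K, (q.-1).-primitive_root g.
Proof.
have q1 := q_gt1.
pose rs := [seq x <- enum K | x != 0].
have: has (q.-1).-primitive_root rs.
  apply: has_prim_root.
  - by rewrite -subn1 subn_gt0.
  - apply/allP => x; rewrite mem_filter => /andP[xn0 _].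
    rewrite unity_rootE; apply/eqP.
    have := expf_card x; rewrite hK -(prednK (ltnW q1)) exprS => e.
    by apply: (mulfI xn0); rewrite mulr1.
  - by rewrite filter_uniq // enum_uniq.
  - rewrite size_filter.
    have := count_predC (fun x : K => x != 0) (enum K).
    rewrite -cardE hK => <-.
    have -> : count (predC (fun x : K => x != 0)) (enum K) = 1%N.
      rewrite (eq_count (a2 := pred1 0)); first by rewrite count_uniq_mem ?enum_uniq ?mem_enum.
      by move=> x /=; rewrite negbK.
    by rewrite addn1.
by case/hasP => g _ pg; exists g.
Qed.

Lemma embedding : exists phi : K -> F,
  [/\ phi 1 = 1, forall x y, phi (x + y) = phi x + phi y &
      forall x y, phi (x * y) = phi x * phi y].
Proof.
have [g pg] := prim_K.
pose I (r : {poly 'F_2}) := evK r g = 0.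
have Igen : I ('X^#|F| - 'X).
  rewrite /I /evK rmorphB /= map_polyXn map_polyX hornerD hornerN hornerXn hornerX.
  by rewrite hF expnS expn1 exprM -hK !expf_card subrr.
have Inz : exists r, I r /\ r != 0.
  exists ('X^#|F| - 'X); split => //.
  by rewrite -size_poly_eq0 size_polyDl ?size_polyXn // size_polyN size_polyX ltnS;
     apply: finNzRing_gt1.
have [P [IP [Pnz Pmin]]] : exists P, I P /\ P != 0 /\
    forall r, I r -> r != 0 -> (size P <= size r)%N.
  case: Inz => r0 [Ir0 r0nz].
  suff H : forall n (r : {poly 'F_2}), (size r <= n)%N -> I r -> r != 0 -> exists P, I P /\ P != 0 /\
    forall r, I r -> r != 0 -> (size P <= size r)%N by exact: (H _ r0 (leqnn _) Ir0 r0nz).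
  elim=> [|n IH] r.
    by rewrite leqn0 size_poly_eq0 => /eqP -> _; rewrite eqxx.
  move=> szr Ir rnz.
  case: (classic (exists r', I r' /\ r' != 0 /\ (size r' < size r)%N)).
    case=> r' [Ir' [r'nz szr']]; apply: (IH r') => //.
    by rewrite -ltnS (leq_trans szr').
  move=> Hn; exists r; split => //; split => // r' Ir' r'nz.
  rewrite leqNgt; apply/negP => lt; apply: Hn; by exists r'.
have Pdvd : forall r, I r -> P %| r.
  move=> r Ir; rewrite /dvdp; apply/negPn/negP => mnz.
  have : I (r %% P).
    rewrite /I; have := divp_eq r P => /(congr1 (fun p => evK p g)).
    rewrite evK_add evK_mul IP mulr0 add0r => <-; exact: Ir.
  move=> Im; have := Pmin _ Im mnz; rewrite leqNgt ltn_modp Pnz //.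
have szP : (1 < size P)%N.
  rewrite ltnNge; apply/negP => sz.
  have [c Pc] : exists c, P = c%:P by exists (P`_0); apply/size1_polyC.
  move: IP Pnz; rewrite /I Pc evK_C => /eqP; rewrite fmorph_eq0 => /eqP ->.
  by rewrite eqxx.
have [h Ph] : exists h : F, evF P h = 0.
  have /Pdvd : I ('X^#|F| - 'X) by [].
  rewrite dvdp_eq => /eqP Hd.
  have : map_poly iF P %| \prod_(x <- enum F) ('X - x%:P).
    have -> : \prod_(x <- enum F) ('X - x%:P) = 'X^#|F| - 'X :> {poly F}.
      by rewrite finField_genPoly big_enum.
    apply/dvdpP; exists (map_poly iF (('X^#|F| - 'X) %/ P)).
    have := congr1 (map_poly iF) Hd; rewrite rmorphM rmorphB /= map_polyXn map_polyX.
    by move=> ->.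
  case/dvdp_prod_XsubC => msk Heq.
  case Hl : (mask msk (enum F)) => [|x l].
    move: Heq; rewrite Hl big_nil => /eqp_size.
    by rewrite size_map_poly size_poly1 => Hs; move: szP; rewrite Hs.
  exists x; apply/eqP; rewrite /evF -/(root _ x) (eqp_root Heq) root_prod_XsubC Hl.
  by rewrite inE eqxx.
have Iev : forall r, I r -> evF r h = 0.
  move=> r /Pdvd; rewrite dvdp_eq => /eqP ->.
  by rewrite evF_mul Ph mulr0.
have exr : forall x : K, exists r, evK r g == x.
  move=> x; case: (eqVneq x 0) => [-> | xnz].
    by exists 0; rewrite /evK rmorph0 horner0.
  have q1 := q_gt1.
  have : x ^+ q.-1 = 1.
    have := expf_card x; rewrite hK -(prednK (ltnW q1)) exprS => e.
    by apply: (mulfI xnz); rewrite mulr1.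
  case/(prim_rootP pg) => i ->; exists 'X^i; by rewrite evK_Xn.
pose phi (x : K) := evF (xchoose (exr x)) h.
have phiE : forall r x, evK r g = x -> phi x = evF r h.
  move=> r x Hr; rewrite /phi; apply/eqP; rewrite -subr_eq0 -evF_opp -evF_add.
  apply/eqP; apply: Iev; rewrite /I evK_add evK_opp (eqP (xchooseP (exr x))) Hr subrr //.
exists phi; split.
- by rewrite (phiE 1) ?evK_1 ?evF_1.
- move=> x y; have [rx /eqP Hx] := exr x; have [ry /eqP Hy] := exr y.
  rewrite (phiE _ _ Hx) (phiE _ _ Hy) (phiE (rx + ry)) ?evF_add //.
  by rewrite evK_add Hx Hy.
- move=> x y; have [rx /eqP Hx] := exr x; have [ry /eqP Hy] := exr y.
  rewrite (phiE _ _ Hx) (phiE _ _ Hy) (phiE (rx * ry)) ?evF_mul //.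
  by rewrite evK_mul Hx Hy.
Qed.
End Emb.



Lemma rank_ge4 (K : fieldType) m n (M : 'M[K]_(m,n)) (r : 'I_4 -> 'I_m) (c : 'I_4 -> 'I_n) :
  (forall a b : 'I_4, (a < b)%N -> M (r a) (c b) = 0) ->
  (forall a, M (r a) (c a) != 0) -> (4 <= \rank M)%N.
Proof.
move=> Hz Hd.
pose N := rowsub r (colsub c M).
have -> : (4 = \rank N)%N.
  apply/esym/mxrank_unit; rewrite unitmxE unitfE det_trig.
    rewrite prodf_seq_neq0; apply/allP => a _ /=; rewrite !mxE; exact: Hd.
  by apply/is_trig_mxP => a b ab; rewrite !mxE Hz.
have e : colsub c M = M *m colsub c 1%:M by rewrite mulmx_colsub mulmx1.
rewrite /N rowsubE e mulmxA.
apply: leq_trans (mxrankM_maxl _ _) _.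
exact: mxrankM_maxr.
Qed.



Section Alg.
Variables (F : finFieldType) (q : nat).
Hypotheses (h2 : (2%N \in [pchar F])) (hF : #|F| = (q ^ 2)%N)
  (hfrob : forall x y : F, (x + y) ^+ q = x ^+ q + y ^+ q)
  (hq3 : (q %% 3 = 1)%N) (hq8 : (8 < q)%N).
Variables (t w : F).
Hypotheses (ht : (q.+1).-primitive_root t) (hw : 3.-primitive_root w).

Lemma two0 : (2 : F) = 0. Proof. have := pcharf0 h2. exact. Qed.
Lemma addxx (x : F) : x + x = 0. Proof. have := addrr_pchar2 h2 x. exact. Qed.
Lemma oppE (x : F) : - x = x. Proof. have := oppr_pchar2 h2 x. exact. Qed.
Lemma sqD (x y : F) : (x + y) ^+ 2 = x ^+ 2 + y ^+ 2.
Proof. by rewrite sqrrD mulr2n addxx addr0. Qed.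
Lemma frobq2 (x : F) : (x ^+ q) ^+ q = x.
Proof. by rewrite -exprM mulnn -hF expf_card. Qed.
Lemma frob0 : (0 : F) ^+ q = 0.
Proof. by rewrite expr0n; case: q hq8. Qed.
Lemma frob1 : (1 : F) ^+ q = 1. Proof. exact: expr1n. Qed.
Lemma frobM (x y : F) : (x * y) ^+ q = x ^+ q * y ^+ q. Proof. exact: exprMn. Qed.
Lemma frobV (x : F) : (x ^-1) ^+ q = (x ^+ q) ^-1. Proof. exact: exprVn. Qed.
Lemma frobX (x : F) n : (x ^+ n) ^+ q = (x ^+ q) ^+ n. Proof. exact: exprAC. Qed.

Lemma frobDiv (x y : F) : (x / y) ^+ q = x ^+ q / y ^+ q.
Proof. by rewrite frobM frobV. Qed.

Lemma unz (u : F) : u ^+ q.+1 = 1 -> u != 0.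
Proof. by move=> e; apply/eqP => u0; move: e; rewrite u0 expr0n /= => /eqP; rewrite eq_sym oner_eq0. Qed.
Lemma uq (u : F) : u ^+ q.+1 = 1 -> u ^+ q = u ^-1.
Proof.
move=> e; have nz := @unz u e.
by rewrite -[u ^+ q](mulfK nz) -exprSr e mul1r.
Qed.

Lemma tU : t ^+ q.+1 = 1. Proof. exact: prim_expr_order ht. Qed.
Lemma tnz : t != 0. Proof. exact: (@unz t tU). Qed.
Lemma tq : t ^+ q = t ^-1. Proof. exact: (@uq t tU). Qed.
Lemma tpow k : (0 < k)%N -> (k < q.+1)%N -> t ^+ k != 1.
Proof.
move=> k0 kq; rewrite -(prim_order_dvd ht); apply/negP => /(dvdn_leq k0).
by rewrite leqNgt kq.
Qed.

Lemma w3 : w ^+ 3 = 1. Proof. exact: prim_expr_order hw. Qed.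

Lemma tpow2 : t ^+ 2 != 1. Proof. by apply: tpow; lia. Qed.
Lemma tpow3 : t ^+ 3 != 1. Proof. by apply: tpow; lia. Qed.
Lemma tpow5 : t ^+ 5 != 1. Proof. by apply: tpow; lia. Qed.
Lemma tpow6 : t ^+ 6 != 1. Proof. by apply: tpow; lia. Qed.
Lemma tn1 : t != 1. Proof. have h := @tpow 1 isT; rewrite expr1 in h; apply: h; lia. Qed.


Lemma wn1 : w != 1.
Proof. by have := prim_order_dvd hw 1; rewrite expr1 => <-. Qed.
Lemma wrel : w ^+ 2 + w + 1 = 0.
Proof.
have e : (w - 1) * (w ^+ 2 + w + 1) = w ^+ 3 - 1 by ring.
move: e; rewrite w3 subrr => /eqP; rewrite mulf_eq0 subr_eq0 (negbTE wn1) /=.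
by move/eqP.
Qed.
Lemma wq : w ^+ q = w.
Proof. by rewrite -(expr_mod _ w3) hq3 expr1. Qed.

Definition A := t + t^-1.
Lemma Aq : A ^+ q = A.
Proof. by rewrite /A hfrob frobV tq invrK addrC. Qed.
Lemma Anz : A != 0.
Proof.
apply/eqP => e; apply: (negP tpow2); apply/eqP.
have e2 : t ^+ 2 = t * A + 1 - 2 by rewrite /A; field; exact: tnz.
by rewrite e2 e mulr0 add0r two0 subr0.
Qed.
Lemma A1nz : A + 1 != 0.
Proof.
apply/eqP => e; apply: (negP tpow3); apply/eqP.
have e3 : t ^+ 3 = (t - 1) * (t * (A + 1)) + 1 by rewrite /A; field; exact: tnz.
by rewrite e3 e !mulr0 add0r.
Qed.

Definition s := (t + A * w) / (A + 1).
Definition s' := (t^-1 + A * w) / (A + 1).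
Lemma ss' : s * s' = 1.
Proof.
have key : (t + A * w) * (t^-1 + A * w) =
   (A + 1) ^+ 2 - 2 * (A ^+ 2 + A) + A ^+ 2 * (w ^+ 2 + w + 1).
  by rewrite /A; field; exact: tnz.
rewrite /s /s' mulrACA -invfM -expr2 key wrel two0 mul0r mulr0 subr0 addr0.
by rewrite divff // expf_neq0 // A1nz.
Qed.
Lemma snz : s != 0.
Proof. by apply/eqP => e; move: ss'; rewrite e mul0r => /eqP; rewrite eq_sym oner_eq0. Qed.
Lemma sinv : s^-1 = s'.
Proof. by rewrite -[s^-1]mulr1 -ss' mulKf // snz. Qed.
Lemma sq : s ^+ q = s'.
Proof.
by rewrite /s /s' frobDiv (hfrob A 1) Aq frob1 hfrob frobM tq wq Aq.
Qed.
Lemma sU : s ^+ q.+1 = 1.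
Proof. by rewrite exprSr sq mulrC ss'. Qed.

Definition B := s + s^-1.
Lemma Bq : B ^+ q = B.
Proof. by rewrite /B hfrob frobV sq -sinv invrK addrC. Qed.
Lemma rel : A * B + A + B = 0.
Proof.
have e : A * B + A + B = 2 * (A * (1 + w)).
  rewrite /B sinv /s /s' /A; field.
  have e : t * t + 1 + t = t * (A + 1) by rewrite /A; field; exact: tnz.
  by rewrite tnz e mulf_neq0 // ?tnz ?A1nz.
by rewrite e two0 mul0r.
Qed.
Definition mu := A + B + 1.
Lemma muq : mu ^+ q = mu.
Proof. by rewrite /mu (hfrob (A + B) 1) (hfrob A B) Aq Bq frob1. Qed.

Lemma Bnz : B != 0.
Proof. by apply/eqP => e; move: rel; rewrite e mulr0 add0r addr0 => /eqP; rewrite (negbTE Anz). Qed.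
Lemma BneA : B != A.
Proof.
apply/eqP => e; move: rel; rewrite e -addrA addxx addr0 => /eqP.
by rewrite mulf_eq0 orbb (negbTE Anz).
Qed.
Lemma tinvnz : t^-1 != 0. Proof. by rewrite invr_eq0 tnz. Qed.
Lemma sinvnz : s^-1 != 0. Proof. by rewrite invr_eq0 snz. Qed.

Lemma eq_addK (x y : F) : (x + y == 0) = (x == y).
Proof. by rewrite addr_eq0 oppE. Qed.

Lemma tinv1 : t^-1 != 1. Proof. by rewrite invr_eq1 tn1. Qed.
Lemma tt' : t != t^-1.
Proof.
apply/eqP => e; apply: (negP tpow2); apply/eqP.
by rewrite expr2 {2}e divff // tnz.
Qed.
Lemma sn1 : s != 1.
Proof. by apply/eqP => e; apply: (negP Bnz); rewrite /B e invr1 addxx. Qed.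
Lemma sinv1 : s^-1 != 1. Proof. by rewrite invr_eq1 sn1. Qed.
Lemma ss'n : s != s^-1.
Proof. by apply/eqP => e; apply: (negP Bnz); rewrite /B -e addxx. Qed.
Lemma stn : s != t.
Proof. by apply/eqP => e; apply: (negP BneA); rewrite /B /A e. Qed.
Lemma st'n : s != t^-1.
Proof. by apply/eqP => e; apply: (negP BneA); rewrite /B /A e invrK addrC. Qed.
Lemma s'tn : s^-1 != t.
Proof. by apply/eqP => e; apply: (negP BneA); rewrite /B /A -e invrK addrC. Qed.
Lemma s't'n : s^-1 != t^-1.
Proof. by apply/eqP => e; apply: (negP BneA); rewrite /B /A (invr_inj e). Qed.

Lemma t2core : (t ^+ 2 != s) && (t ^+ 2 != s^-1).
Proof.
have key : forall x : F, x != 0 -> (t ^+ 2 = x \/ t ^+ 2 = x^-1) -> x + x^-1 = t ^+ 2 + (t ^+ 2)^-1.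
  by move=> x _ [->|->]; rewrite ?invrK // addrC.
suff : ~ (t ^+ 2 = s \/ t ^+ 2 = s^-1).
  by move=> H; apply/andP; split; apply/eqP => e; apply: H; [left|right].
move=> H; have eB : B = t ^+ 2 + (t ^+ 2)^-1 by rewrite /B key // snz.
have e : t ^+ 3 * (A * B + A + B) = (t + 1) * (t ^+ 5 + 1) + 2 * (t ^+ 4 + t ^+ 2).
  by rewrite eB /A; field; rewrite tnz.
move: e; rewrite rel mulr0 two0 mul0r addr0 => /esym/eqP.
rewrite mulf_eq0 !eq_addK (negbTE tn1) /= => /eqP e5.
by apply: (negP tpow5); rewrite e5.
Qed.

Definition inS (x : F) := [|| x == 1, x == t, x == t^-1, x == s | x == s^-1].

Lemma t2S : ~~ inS (t ^+ 2).
Proof.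
rewrite /inS (negbTE tpow2) /=; case/andP: t2core => /negbTE -> /negbTE ->; rewrite !orbF.
apply/norP; split.
  by apply/eqP => e; apply: (negP tn1); apply/eqP; apply: (mulfI tnz); rewrite -expr2 e mulr1.
apply/eqP => e; apply: (negP tpow3); apply/eqP.
by rewrite exprSr e mulVf // tnz.
Qed.
Lemma inSV x : x != 0 -> inS (x^-1) = inS x.
Proof.
move=> xnz; rewrite /inS invr_eq1 !(can2_eq (@invrK _) (@invrK _)) !invrK.
by case: (x == 1); case: (x == t); case: (x == t^-1); case: (x == s); case: (x == s^-1).
Qed.
Lemma tm2S : ~~ inS ((t ^+ 2)^-1).
Proof. by rewrite inSV ?t2S // expf_neq0 // tnz. Qed.

Definition Z (z : F) : {set F} := [set z; z * t; z * t^-1; z * s; z * s^-1].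

Lemma inZE z u : z != 0 -> (u \in Z z) = inS (z^-1 * u).
Proof.
move=> znz; rewrite /Z /inS !inE.
have e : forall y, (u == z * y) = (z^-1 * u == y).
  move=> y; apply/eqP/eqP => [->|<-]; first by rewrite mulKf.
  by rewrite mulVKf.
by rewrite -[z in u == z]mulr1 !e !orbA.
Qed.

Lemma card5 (T : finType) (a b c d e : T) :
  a != b -> a != c -> a != d -> a != e -> b != c -> b != d -> b != e ->
  c != d -> c != e -> d != e -> #|[set a; b; c; d; e]| = 5%N.
Proof.
move=> ab ac ad ae bc bd be cd ce de.
have -> : [set a; b; c; d; e] = a |: (b |: (c |: (d |: [set e]))).
  by apply/setP => x; rewrite !inE !orbA.
rewrite !cardsU1 cards1 !inE.
by rewrite (negbTE ab) (negbTE ac) (negbTE ad) (negbTE ae) (negbTE bc) (negbTE bd)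
  (negbTE be) (negbTE cd) (negbTE ce) (negbTE de).
Qed.

Lemma cardZ z : z != 0 -> #|Z z| = 5%N.
Proof.
move=> znz; have m : forall x y, x != y -> z * x != z * y.
  by move=> x y; apply: contra => /eqP/(mulfI znz)/eqP.
rewrite /Z -[z in [set z; _ ; _; _; _]]mulr1.
apply: card5; apply: m.
- by rewrite eq_sym tn1.
- by rewrite eq_sym tinv1.
- by rewrite eq_sym sn1.
- by rewrite eq_sym sinv1.
- exact: tt'.
- by rewrite eq_sym stn.
- by rewrite eq_sym s'tn.
- by rewrite eq_sym st'n.
- by rewrite eq_sym s't'n.
- exact: ss'n.
Qed.

Definition Pi (z u : F) := u ^+ 5 + mu * z * u ^+ 4 + mu * z ^+ 4 * u + z ^+ 5.

Lemma prod_gen (x y z u : F) : x != 0 -> y != 0 ->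
  (u + z) * (u + z * x) * (u + z * x^-1) * (u + z * y) * (u + z * y^-1) =
  u ^+ 5 + ((x + x^-1) + (y + y^-1) + 1) * z * u ^+ 4 + ((x + x^-1) + (y + y^-1) + 1) * z ^+ 4 * u + z ^+ 5
  + ((x + x^-1) * (y + y^-1) + (x + x^-1) + (y + y^-1) + 2) * (z ^+ 2 * u ^+ 3 + z ^+ 3 * u ^+ 2).
Proof. by move=> xnz ynz; field; rewrite xnz ynz. Qed.

Lemma Pi_prod z u : Pi z u = (u + z) * (u + z * t) * (u + z * t^-1) * (u + z * s) * (u + z * s^-1).
Proof.
rewrite prod_gen ?tnz ?snz // -/A -/B rel two0 addr0 mul0r addr0.
by rewrite /Pi /mu.
Qed.

Lemma Pi0 z u : (Pi z u == 0) = (u \in Z z).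
Proof.
by rewrite Pi_prod !mulf_eq0 !eq_addK /Z !inE ?orbA.
Qed.

Definition cw (z k u : F) := C35 q ((k * mu * z) ^+ 2) 0 (k ^+ 2) 0 u.

Lemma cw_zero z k u : z ^+ q.+1 = 1 -> k != 0 -> k ^+ q = k * z ^+ 5 ->
  u ^+ q.+1 = 1 -> (trq q (cw z k u) != 0) = (u \notin Z z).
Proof.
move=> zU knz kq uU.
have znz := @unz z zU; have unz' := @unz u uU.
rewrite -Pi0 /trq /cw /C35 !mul0r !addr0 hfrob !frobM kq muq (@uq z zU) (@uq u uU).
match goal with |- (?T != 0) = _ => have key : u ^+ 5 * T = (k * Pi z u) ^+ 2 end.
  rewrite [RHS]exprMn /Pi !sqD.
  by field; rewrite znz unz'.
apply/idP/idP; apply: contra => /eqP H.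
  move: key; rewrite H mulr0 expr0n /= => /eqP.
  by rewrite mulf_eq0 expf_eq0 /= (negbTE unz').
by move: key; rewrite H mulr0 => /esym/eqP; rewrite sqrf_eq0 mulf_eq0 (negbTE knz).
Qed.

Lemma Umul (x y : F) : x ^+ q.+1 = 1 -> y ^+ q.+1 = 1 -> (x * y) ^+ q.+1 = 1.
Proof. by move=> hx hy; rewrite exprMn hx hy mulr1. Qed.
Lemma Uinv (x : F) : x ^+ q.+1 = 1 -> (x ^-1) ^+ q.+1 = 1.
Proof. by move=> hx; rewrite exprVn hx invr1. Qed.
Lemma inU (x : F) : (x \in Uroots F q) = (x ^+ q.+1 == 1).
Proof. by rewrite inE. Qed.

Lemma cardU : #|Uroots F q| = q.+1.
Proof.
have -> : Uroots F q = (fun i : 'I_q.+1 => t ^+ i) @: setT.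
  apply/setP => u; rewrite inU; apply/eqP/imsetP.
    by case/(prim_rootP ht) => i ->; exists i.
  by case=> i _ ->; rewrite exprAC tU expr1n.
rewrite card_imset ?cardsT ?card_ord // => i j /eqP.
rewrite (eq_prim_root_expr ht) !modn_small // => /eqP e; exact: val_inj.
Qed.

Lemma ZsubU z : z ^+ q.+1 = 1 -> Z z \subset Uroots F q.
Proof.
move=> zU; have tU' := tU; have sU' := sU.
apply/subsetP => u; rewrite /Z !inE -!orbA.
move=> /orP[/eqP->|/orP[/eqP->|/orP[/eqP->|/orP[/eqP->|/eqP->]]]]; apply/eqP=> //; apply: Umul => //; exact: Uinv.

Qed.

Definition blk z := Uroots F q :\: Z z.

Lemma blk_in z k : z ^+ q.+1 = 1 -> k != 0 -> k ^+ q = k * z ^+ 5 ->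
  blk z \in blocksW F q (q - 4).
Proof.
move=> zU knz kq; rewrite inE; apply/existsP.
exists ((k * mu * z) ^+ 2, 0, k ^+ 2, 0) => /=; apply/andP; split.
  apply/eqP/setP => u; rewrite /blk /trSupport !inE.
  case uU : (u ^+ q.+1 == 1); rewrite ?andbF // andbT.
  by rewrite /= cw_zero // ?(eqP uU) // /Z !inE.
rewrite /blk cardsD (setIidPr (@ZsubU z zU)) cardU cardZ ?(@unz z zU) //.
Qed.

Lemma kappa (z : F) : z ^+ q.+1 = 1 -> z ^+ 3 != 1 ->
  let k := z^-1 + (z ^+ 4)^-1 in k != 0 /\ k ^+ q = k * z ^+ 5.
Proof.
move=> zU z3 k; have znz := @unz z zU.
split.
  apply/eqP => e; apply: (negP z3); apply/eqP.
  have e' : z ^+ 3 = k * z ^+ 4 + 1 - 2 by rewrite /k; field; rewrite znz.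
  by rewrite e' e mul0r add0r two0 subr0.
rewrite /k hfrob !frobV frobX (@uq z zU) invrK exprVn invrK.
by field; rewrite znz.
Qed.

Definition zeta (a : 'I_4) : F := nth 1 [:: 1; t^-1; t; t ^+ 2] a.
Definition pt (a : 'I_4) : F := nth 1 [:: t ^+ 2; t; t^-1; 1] a.

Lemma zetaU a : zeta a ^+ q.+1 = 1.
Proof.
have tU' := tU.
case: a => [[|[|[|[|a]]]] Ha] //=; rewrite ?expr1n ?Uinv //.
by rewrite exprAC tU' expr1n.
Qed.
Lemma zeta_nz a : zeta a != 0. Proof. exact: (@unz _ (zetaU a)). Qed.
Lemma ptU a : pt a \in Uroots F q.
Proof.
have tU' := tU; rewrite inU.
case: a => [[|[|[|[|a]]]] Ha] //; rewrite /pt /=; apply/eqP; rewrite ?expr1n ?Uinv //.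
by rewrite exprAC tU' expr1n.
Qed.

Lemma blk_zeta a : blk (zeta a) \in blocksW F q (q - 4).
Proof.
case: a => [[|[|[|[|a]]]] Ha] //=.
- apply: (@blk_in 1 1); rewrite ?expr1n ?mulr1 ?oner_neq0 //.
- have z3 : (t^-1) ^+ 3 != 1 by rewrite exprVn invr_eq1 tpow3.
  have zU : (t^-1) ^+ q.+1 = 1 by apply: Uinv; exact: tU.
  by case: (@kappa _ zU z3) => k1 k2; exact: (@blk_in _ _ zU k1 k2).
- have zU := tU.
  by case: (@kappa _ zU tpow3) => k1 k2; exact: (@blk_in _ _ zU k1 k2).
- have z3 : (t ^+ 2) ^+ 3 != 1 by rewrite -exprM tpow6.
  have zU : (t ^+ 2) ^+ q.+1 = 1 by rewrite exprAC tU expr1n.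
  by case: (@kappa _ zU z3) => k1 k2; exact: (@blk_in _ _ zU k1 k2).
Qed.

Lemma in_blk a b : (pt b \in blk (zeta a)) = ~~ inS ((zeta a)^-1 * pt b).
Proof. by rewrite /blk in_setD ptU andbT inZE ?zeta_nz. Qed.

Lemma inS_t : inS t. Proof. by rewrite /inS eqxx !orbT. Qed.
Lemma inS_t' : inS t^-1. Proof. by rewrite /inS eqxx !orbT. Qed.
Lemma inS_1 : inS 1. Proof. by rewrite /inS eqxx. Qed.

Lemma config_zero (a b : 'I_4) : (a < b)%N -> pt b \notin blk (zeta a).
Proof.
rewrite in_blk negbK.
have tnz' := tnz.
case: a => [[|[|[|[|a]]]] Ha] //=; case: b => [[|[|[|[|b]]]] Hb] //= _;
  rewrite ?invr1 ?mul1r ?invrK ?mulr1 ?inS_t ?inS_t' ?inS_1 //.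
- by rewrite divff // inS_1.
Qed.

Lemma config_diag (a : 'I_4) : pt a \in blk (zeta a).
Proof.
rewrite in_blk.
have tnz' := tnz.
case: a => [[|[|[|[|a]]]] Ha] //=.
- by rewrite invr1 mul1r t2S.
- by rewrite invrK -expr2 t2S.
- by rewrite -invfM -expr2 tm2S.
- by rewrite mulr1 tm2S.
Qed.

Section Upper.
Variable K : finFieldType.
Variable psi : F -> K.
Hypothesis psi0 : forall y, y ^+ q = y -> (psi y != 0) = (y != 0).
Hypothesis psiD : forall y z, y ^+ q = y -> z ^+ q = z -> psi (y + z) = psi y + psi z.
Hypothesis psiM : forall y z, y ^+ q = y -> z ^+ q = z -> psi (y * z) = psi y * psi z.

Definition Tr (x : F) := x + x ^+ q.
Lemma trqE (x : F) : trq q x = Tr x. Proof. by []. Qed.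
Lemma TrGF (x : F) : (Tr x) ^+ q = Tr x.
Proof. by rewrite /Tr hfrob frobq2 addrC. Qed.
Lemma TrD (x y : F) : Tr (x + y) = Tr x + Tr y.
Proof. by rewrite /Tr hfrob; ring. Qed.
Lemma TrZ (c x : F) : c ^+ q = c -> Tr (c * x) = c * Tr x.
Proof. by move=> hc; rewrite /Tr frobM hc mulrDr. Qed.
Lemma Trq (x : F) : Tr (x ^+ q) = Tr x.
Proof. by rewrite /Tr frobq2 addrC. Qed.
Lemma GFD (y z : F) : y ^+ q = y -> z ^+ q = z -> (y + z) ^+ q = y + z.
Proof. by move=> hy hz; rewrite hfrob hy hz. Qed.
Lemma GFM (y z : F) : y ^+ q = y -> z ^+ q = z -> (y * z) ^+ q = y * z.
Proof. by move=> hy hz; rewrite frobM hy hz. Qed.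

Definition th := t.
Definition dd := th ^+ q + th.
Lemma dd_nz : dd != 0.
Proof. by rewrite /dd /th tq eq_addK eq_sym tt'. Qed.
Definition cy (a : F) := (a ^+ q + a) / dd.
Definition cx (a : F) := a + cy a * th.
Lemma ddq : dd ^+ q = dd.
Proof. by rewrite /dd hfrob frobq2 addrC. Qed.
Lemma cyq (a : F) : (cy a) ^+ q = cy a.
Proof. by rewrite /cy frobDiv ddq hfrob frobq2 addrC. Qed.
Lemma cxq (a : F) : (cx a) ^+ q = cx a.
Proof.
apply/eqP; rewrite -eq_addK /cx hfrob frobM cyq.
have e : a ^+ q + cy a * th ^+ q + (a + cy a * th) = (a ^+ q + a) + cy a * dd by rewrite /dd; ring.
by rewrite e /cy divfK ?dd_nz // addxx.
Qed.
Lemma cxy (a : F) : a = cx a + cy a * th.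
Proof. by rewrite /cx -addrA addxx addr0. Qed.

Lemma Tr_dec (a x : F) : Tr (a * x) = cx a * Tr x + cy a * Tr (th * x).
Proof.
rewrite {1}(cxy a) mulrDl TrD -mulrA.
by rewrite (TrZ (cx a) x (cxq a)) (TrZ (cy a) (th * x) (cyq a)).
Qed.

Definition coef (S : {set F}) : F * F * F * F :=
  odflt (0, 0, 0, 0) [pick a : F * F * F * F | S == trSupport q a.1.1.1 a.1.1.2 a.1.2 a.2].
Definition ff (S : {set F}) (u : F) :=
  let a := coef S in trq q (C35 q a.1.1.1 a.1.1.2 a.1.2 a.2 u).

Lemma coefP S : S \in blocksW F q (q - 4) ->
  S = trSupport q (coef S).1.1.1 (coef S).1.1.2 (coef S).1.2 (coef S).2.
Proof.
rewrite inE => /existsP [a /andP[/eqP e _]].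
rewrite /coef; case: pickP => [b /eqP //|/(_ a)]; by rewrite e eqxx.
Qed.

Lemma ffGF S u : (ff S u) ^+ q = ff S u.
Proof. by rewrite /ff /trq hfrob frobq2 addrC. Qed.

Lemma pow_qm (u : F) k : u ^+ q.+1 = 1 -> (k <= q)%N -> (u ^+ (q - k)) ^+ q = u ^+ k.+1.
Proof.
move=> uU kq; have unz' := @unz u uU.
have e : u ^+ (q - k) = (u ^+ k.+1)^-1.
  apply: (mulIf (expf_neq0 k.+1 unz')); rewrite mulVf ?expf_neq0 // -exprD.
  by rewrite addnS subnK.
by rewrite e frobV frobX (@uq u uU) exprVn invrK.
Qed.

Definition alpha S := let a := coef S in a.1.1.1 + a.1.1.2 ^+ q.
Definition beta S := let a := coef S in a.1.2 + a.2 ^+ q.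
Definition cf S (k : 'I_4) : F :=
  nth 0 [:: cx (alpha S); cy (alpha S); cx (beta S); cy (beta S)] k.
Definition Tk (k : 'I_4) (u : F) : F :=
  nth 0 [:: Tr (u ^+ 3); Tr (th * u ^+ 3); Tr (u ^+ 5); Tr (th * u ^+ 5)] k.

Lemma cfGF S k : (cf S k) ^+ q = cf S k.
Proof. by case: k => [[|[|[|[|k]]]] Hk] //=; rewrite /cf /= ?cxq ?cyq. Qed.
Lemma TkGF k u : (Tk k u) ^+ q = Tk k u.
Proof. by case: k => [[|[|[|[|k]]]] Hk] //=; rewrite /Tk /= TrGF. Qed.

Lemma ff_dec S u : u ^+ q.+1 = 1 -> ff S u = \sum_(k < 4) cf S k * Tk k u.
Proof.
move=> uU.
rewrite !big_ord_recl big_ord0 addr0 /cf /Tk /=.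
rewrite /ff /C35 trqE !TrD -(Trq (_ * u ^+ (q - 2))) -(Trq (_ * u ^+ (q - 4))).
rewrite !frobM !pow_qm //; try lia.
have e3 : Tr ((coef S).1.1.1 * u ^+ 3) + Tr ((coef S).1.1.2 ^+ q * u ^+ 3)
   = Tr (alpha S * u ^+ 3) by rewrite /alpha -TrD mulrDl.
have e5 : Tr ((coef S).1.2 * u ^+ 5) + Tr ((coef S).2 ^+ q * u ^+ 5)
   = Tr (beta S * u ^+ 5) by rewrite /beta -TrD mulrDl.
transitivity (Tr (alpha S * u ^+ 3) + Tr (beta S * u ^+ 5)).
  by rewrite -e3 -e5; ring.
by rewrite (Tr_dec (alpha S)) (Tr_dec (beta S)); ring.
Qed.

Lemma psi4 (c0 c1 c2 c3 T0 T1 T2 T3 : F) :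
  c0 ^+ q = c0 -> c1 ^+ q = c1 -> c2 ^+ q = c2 -> c3 ^+ q = c3 ->
  T0 ^+ q = T0 -> T1 ^+ q = T1 -> T2 ^+ q = T2 -> T3 ^+ q = T3 ->
  psi (c0 * T0 + (c1 * T1 + (c2 * T2 + c3 * T3))) =
  psi c0 * psi T0 + (psi c1 * psi T1 + (psi c2 * psi T2 + psi c3 * psi T3)).
Proof.
move=> g0 g1 g2 g3 k0 k1 k2 k3.
rewrite psiD ?GFD ?GFM // psiD ?GFD ?GFM // psiD ?GFD ?GFM //.
by rewrite !psiM.
Qed.

Lemma psi_dec S u : u ^+ q.+1 = 1 ->
  psi (ff S u) = \sum_(k < 4) psi (cf S k) * psi (Tk k u).
Proof.
move=> uU; rewrite ff_dec // !big_ord_recl !big_ord0 !addr0.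
by apply: psi4; rewrite ?cfGF ?TkGF.
Qed.

Definition Mup : 'M[K]_(#|blocksW F q (q - 4)|, #|Uroots F q|) :=
  \matrix_(i, j) psi (ff (enum_val i) (enum_val j)).

Lemma Mup_nz : nz_incidence Mup.
Proof.
move=> i j; rewrite mxE psi0 ?ffGF //.
have hS := enum_valP i; have hu := enum_valP j.
rewrite {2}(@coefP _ hS) /trSupport inE hu /=.
by [].
Qed.

Lemma Mup_rank : (\rank Mup <= 4)%N.
Proof.
pose X : 'M[K]_(#|blocksW F q (q - 4)|, 4) := \matrix_(i, k) psi (cf (enum_val i) k).
pose Y : 'M[K]_(4, #|Uroots F q|) := \matrix_(k, j) psi (Tk k (enum_val j)).
have -> : Mup = X *m Y.
  apply/matrixP => i j; rewrite !mxE psi_dec; last by have := enum_valP j; rewrite inU => /eqP.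
  by apply: eq_bigr => k _; rewrite !mxE.
exact: leq_trans (mxrankM_maxr _ _) (rank_leq_row _).
Qed.
End Upper.

Lemma lower (K : finFieldType) (M : 'M[K]_(#|blocksW F q (q - 4)|, #|Uroots F q|)) :
  nz_incidence M -> (4 <= \rank M)%N.
Proof.
move=> nzM.
pose r (a : 'I_4) := enum_rank_in (blk_zeta ord0) (blk (zeta a)).
pose c (a : 'I_4) := enum_rank_in (ptU ord0) (pt a).
apply: (@rank_ge4 _ _ _ M r c).
- move=> a b ab; apply/eqP/negPn; rewrite nzM /r /c !enum_rankK_in ?blk_zeta ?ptU //.
  exact: config_zero.
- move=> a; rewrite nzM /r /c !enum_rankK_in ?blk_zeta ?ptU //; exact: config_diag.
Qed.

Lemma final (K : finFieldType) (psi : F -> K)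
  (psi0 : forall y, y ^+ q = y -> (psi y != 0) = (y != 0))
  (psiD : forall y z, y ^+ q = y -> z ^+ q = z -> psi (y + z) = psi y + psi z)
  (psiM : forall y z, y ^+ q = y -> z ^+ q = z -> psi (y * z) = psi y * psi z) :
  design_dim_eq K (Uroots F q) (blocksW F q (q - 4)) 4.
Proof.
split; last by move=> M hM; exact: lower.
exists (Mup K psi); split; first exact: (@Mup_nz K psi psi0).
by apply/eqP; rewrite eqn_leq (@Mup_rank K psi psiD psiM) (@lower K _ (@Mup_nz K psi psi0)).
Qed.
End Alg.


Theorem theorem31 (m : nat) (hm : (6 <= m)%N) (hev : ~~ odd m)
  (K F : finFieldType) (hK : #|K| = (2 ^ m)%N) (hF : #|F| = ((2 ^ m) ^ 2)%N) :
  design_dim_eq K (Uroots F (2 ^ m)) (blocksW F (2 ^ m) (2 ^ m - 4)) 4.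
Proof.
have h2F : (2%N \in [pchar F]).
  by apply: (@card_finPcharP F 2 (m * 2)) => //; rewrite hF expnM.
have h2K : (2%N \in [pchar K]) by apply: (@card_finPcharP K 2 m).
set q := (2 ^ m)%N in hK hF *.
have frob2 : forall (k : nat) (x y : F), (x + y) ^+ (2 ^ k) = x ^+ (2 ^ k) + y ^+ (2 ^ k).
  elim => [|k IH] x y; first by rewrite !expr1.
  rewrite expnSr !exprM IH sqrrD mulr2n.
  by have -> := addrr_pchar2 h2F (x ^+ (2 ^ k) * y ^+ (2 ^ k)); rewrite addr0.
have hfrob : forall x y : F, (x + y) ^+ q = x ^+ q + y ^+ q by move=> x y; exact: frob2.
have hq3 : (q %% 3 = 1)%N.
  rewrite /q; have [k ->] : exists k, m = (2 * k)%N.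
    by exists m./2; rewrite mul2n -[LHS]odd_double_half (negbTE hev) add0n.
  rewrite expnM; elim: k => // k IH; rewrite expnS -modnMm IH //.
have hq8 : (8 < q)%N.
  have : (2 ^ 3 < 2 ^ m)%N by rewrite ltn_exp2l //; lia.
  by [].
have q1 : (1 < q)%N by lia.
have [z pz] := prim_K _ _ hF.
have hfac : ((q ^ 2).-1 = q.+1 * q.-1)%N.
  move: q1; case: (q) => // p _; rewrite expnS expn1 /=; nia.
have d1 : (q.+1 %| (q ^ 2).-1)%N by rewrite hfac dvdn_mulr.
have d3 : (3 %| (q ^ 2).-1)%N.
  rewrite hfac; apply: dvdn_mull.
  by apply/dvdnP; exists (q %/ 3)%N; lia.
have ht := dvdn_prim_root pz d1.
have hw := dvdn_prim_root pz d3.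
have [phi [phi1 phiD phiM]] := embedding _ _ h2K h2F _ hK hF.
have phi0 : phi 0 = 0.
  by apply: (addrI (phi 0)); rewrite -phiD !addr0.
have phiN : forall x, phi (- x) = - phi x.
  by move=> x; apply: (addrI (phi x)); rewrite -phiD !subrr phi0.
have phi_inj : injective phi.
  move=> x y e; apply/eqP; rewrite -subr_eq0; apply/eqP.
  have hz : phi (x - y) = 0 by rewrite phiD phiN e subrr.
  case: (eqVneq (x - y) 0) => // nz.
  have := phiM (x - y) (x - y)^-1; rewrite mulfV // phi1 hz mul0r => /eqP.
  by rewrite oner_eq0.
have phiX : forall x n, phi (x ^+ n) = (phi x) ^+ n.
  by move=> x; elim => [|n IH]; rewrite ?expr0 ?phi1 // !exprS phiM IH.
have phiGF : forall x, (phi x) ^+ q = phi x by move=> x; rewrite -phiX -hK expf_card.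
pose G := [set y : F | y ^+ q == y].
have cardG : (#|G| <= q)%N.
  have pnz : ('X^q - 'X : {poly F}) != 0.
    by rewrite -size_poly_eq0 size_polyDl ?size_polyXn // size_polyN size_polyX ltnS.
  have := max_poly_roots pnz _ (enum_uniq G).
  rewrite size_polyDl ?size_polyXn ?size_polyN ?size_polyX ?ltnS // -cardE; apply.
  apply/allP => y; rewrite mem_enum inE => /eqP hy.
  by rewrite rootE !hornerE hy subrr.
have imG : phi @: setT \subset G.
  by apply/subsetP => y /imsetP [x _ ->]; rewrite inE phiGF.
have card_im : #|phi @: setT| = q by rewrite card_imset // cardsT hK.
have eqG : phi @: setT = G by apply/eqP; rewrite eqEcard imG card_im cardG.
have surj : forall y, y ^+ q = y -> exists x, phi x = y.
  move=> y hy; have : y \in G by rewrite inE hy.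
  by rewrite -eqG => /imsetP [x _ ->]; exists x.
pose psi (y : F) : K := odflt 0 [pick x | phi x == y].
have psiE : forall x, psi (phi x) = x.
  move=> x; rewrite /psi; case: pickP => [x' /eqP /phi_inj //|/(_ x)].
  by rewrite eqxx.
have psi0 : forall y, y ^+ q = y -> (psi y != 0) = (y != 0).
  move=> y /surj [x <-]; rewrite psiE; congr negb.
  apply/eqP/eqP => [->|h]; first exact: phi0.
  by apply: phi_inj; rewrite h phi0.
have psiD : forall y z, y ^+ q = y -> z ^+ q = z -> psi (y + z) = psi y + psi z.
  by move=> y z' /surj [x1 <-] /surj [x2 <-]; rewrite -phiD !psiE.
have psiM : forall y z, y ^+ q = y -> z ^+ q = z -> psi (y * z) = psi y * psi z.
  by move=> y z' /surj [x1 <-] /surj [x2 <-]; rewrite -phiM !psiE.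
exact: (@final F q h2F hF hfrob hq3 hq8 _ _ ht hw K psi psi0 psiD psiM).
Qed.
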